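(* The equation $x+y=z$ with $x,y,z\in\mathcal{B}_2$ has exactly one solution, namely $$x=y=\frac{\sqrt3-1}{2}=[\overline{2,1}],\qquad z=\sqrt3-1=[\overline{1,2}].$$
   Context: For irrational $x\in(0,1)$, $x=[a_1(x),a_2(x),\dots]$ denotes its simple continued fraction expansion; an overline denotes a periodically repeated block. $\mathcal{B}_2$ is the set of irrational $x\in(0,1)$ with $a_k(x)\le 2$ for all $k\ge1$. *)

(* Defs.v *)
From Stdlib Require Import Reals Lra Lia ZArith.
Open Scope R_scope.

Definition floorR (x : R) : Z := (up x - 1)%Z.

(* The Gauss map x |-> 1/x - floor(1/x), which shifts continued fraction
   expansions: if x = [a1,a2,...] then gauss x = [a2,a3,...]. *)
Definition gauss (x : R) : R := / x - IZR (floorR (/ x)).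

(* k-th partial quotient a_k(x) (k >= 1) of the simple continued fraction
   expansion of x in (0,1):  a_k(x) = floor(1 / T^{k-1} x). *)
Definition cf_digit (k : nat) (x : R) : Z :=
  floorR (/ (Nat.iter (k - 1) gauss x)).

Definition irrational (x : R) : Prop :=
  forall p q : Z, q <> 0%Z -> x <> IZR p / IZR q.

Definition B2 (x : R) : Prop :=
  0 < x < 1 /\ irrational x /\ forall k : nat, (1 <= k)%nat -> (cf_digit k x <= 2)%Z.

(* Main.v *)
Require Import Defs.
From Stdlib Require Import Reals Lra Lia ZArith.
Open Scope R_scope.

Lemma floor_spec (u : R) : IZR (floorR u) <= u < IZR (floorR u) + 1.
Proof.
  unfold floorR. destruct (archimed u) as [H1 H2].
  rewrite minus_IZR. lra.
Qed.

Lemma floor_unique (u : R) (k : Z) : IZR k <= u < IZR k + 1 -> floorR u = k.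
Proof.
  intros [H1 H2]. destruct (floor_spec u) as [H3 H4].
  assert (A : (floorR u < k + 1)%Z).
  { apply lt_IZR. rewrite plus_IZR. lra. }
  assert (B : (k < floorR u + 1)%Z).
  { apply lt_IZR. rewrite plus_IZR. lra. }
  lia.
Qed.

Lemma sqrt3_facts : sqrt 3 * sqrt 3 = 3 /\ 17/10 < sqrt 3 < 7/4.
Proof.
  assert (H : sqrt 3 * sqrt 3 = 3) by (apply sqrt_sqrt; lra).
  assert (P := sqrt_pos 3). split; [exact H|]. split; nra.
Qed.

Lemma gauss_props (t : R) : 0 < t < 1 -> irrational t ->
  0 < gauss t < 1 /\ irrational (gauss t).
Proof.
  intros Ht Hi. unfold gauss.
  set (u := / t). set (k := floorR u).
  assert (Hu : u * t = 1) by (unfold u; field; lra).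
  assert (Hupos : 0 < u) by (unfold u; apply Rinv_0_lt_compat; lra).
  destruct (floor_spec u) as [F1 F2]. fold k in F1, F2.
  assert (Hne : u - IZR k <> 0).
  { intro E. apply (Hi 1%Z k).
    - intro Hk. subst. rewrite Hk in E. simpl in E. lra.
    - assert (u = IZR k) by lra. rewrite <- H.
      unfold u. field. lra. }
  split; [lra|].
  intros p q Hq E. apply (Hi q (p + k * q)%Z).
  - intro Z0. assert (IZR (p + k*q) = 0) by (rewrite Z0; reflexivity).
    rewrite plus_IZR, mult_IZR in H.
    assert (u = IZR p / IZR q + IZR k) by lra.
    assert (IZR q <> 0) by (apply not_0_IZR; exact Hq).
    assert (u * IZR q = 0).
    { rewrite H0. field_simplify; [|exact H1]. lra. }
    apply Rmult_integral in H2. lra.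
  - assert (IZR q <> 0) by (apply not_0_IZR; exact Hq).
    assert (u = IZR p / IZR q + IZR k) by lra.
    rewrite plus_IZR, mult_IZR.
    assert (E2 : u * IZR q = IZR p + IZR k * IZR q) by (rewrite H0; field; exact H).
    assert (IZR p + IZR k * IZR q <> 0).
    { rewrite <- E2. apply Rmult_integral_contrapositive. split; lra. }
    apply (Rmult_eq_reg_l (IZR p + IZR k * IZR q)); [|exact H1].
    rewrite <- E2. unfold Rdiv.
    rewrite (Rmult_comm (IZR q)), <- Rmult_assoc, Rinv_r by (rewrite E2; exact H1).
    rewrite Rmult_1_l. rewrite Rmult_comm, <- Rmult_assoc, (Rmult_comm t u), Hu. ring.
Qed.

Definition ca := (sqrt 3 - 1) / 2.
Definition cb := sqrt 3 - 1.

Lemma consts : cb = 2 * ca /\ (ca + 1) * cb = 1 /\ ca * (2 + cb) = 1 /\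
  17/20 < ca + 1/2 < 7/8 /\ 7/10 < cb < 3/4.
Proof.
  destruct sqrt3_facts as [H [H1 H2]]. unfold ca, cb.
  repeat split; try lra; nra.
Qed.

Definition Dev (t D : R) := D <= t - cb \/ D <= ca - t.

Lemma step (t D d0 : R) : 0 < t < 1 -> (floorR (/ t) <= 2)%Z -> 0 < d0 -> d0 <= D ->
  Dev t D -> Dev (gauss t) (D + d0 / 3).
Proof.
  intros Ht Hk Hd0 HD Hdev.
  destruct consts as [C1 [C2 [C3 [C4 C5]]]].
  unfold gauss. set (u := / t). set (k := floorR u).
  assert (Hu : u * t = 1) by (unfold u; field; lra).
  assert (Hupos : 0 < u) by (unfold u; apply Rinv_0_lt_compat; lra).
  assert (Hu1 : 1 < u) by nra.
  destruct (floor_spec u) as [F1 F2]. fold k in F1, F2.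
  assert (Hk2 : IZR k <= 2) by (apply IZR_le; exact Hk).
  destruct Hdev as [Hd | Hd].
  -
    assert (Hub : u < ca + 1).
    { apply (Rmult_lt_reg_r cb); [lra|]. rewrite C2. nra. }
    assert (k = 1%Z).
    { assert (k < 2)%Z by (apply lt_IZR; lra).
      assert (0 < k)%Z by (apply lt_IZR; lra). lia. }
    rewrite H. right.
    assert (E : u * (ca + 1) * (t - cb) = (ca + 1) * (u * t) - u * ((ca + 1) * cb)) by ring.
    rewrite Hu, C2 in E.
    assert (u * (ca + 1) * (t - cb) >= (ca+1) * (t - cb)).
    { assert (0 <= (ca+1)*(t-cb)) by nra. nra. }
    assert ((ca+1)*(t-cb) >= 4/3 * (t - cb)) by nra.
    simpl IZR. lra.
  -
    left.
    assert (E : u * (2 + cb) * (ca - t) = (u * ((ca * (2+cb)))) - (2+cb) * (u * t)) by ring.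
    rewrite Hu, C3 in E.
    assert (Hu2 : 2 < u) by nra.
    assert (u * (2+cb) >= 4) by nra.
    assert (u * (2 + cb) * (ca - t) >= 4 * (ca - t)) by nra.
    lra.
Qed.

Lemma iter_props0 (x : R) : 0 < x < 1 -> irrational x -> forall n,
  0 < Nat.iter n gauss x < 1 /\ irrational (Nat.iter n gauss x).
Proof.
  intros Hx Hi n. induction n as [|n IH]; simpl; [tauto|].
  destruct IH; apply gauss_props; auto.
Qed.

Lemma no_dev (x d0 : R) : B2 x -> 0 < d0 -> Dev x d0 -> False.
Proof.
  intros HB Hd0 Hdev.
  destruct HB as [Hx [Hi Hd]].
  assert (HI := iter_props0 x Hx Hi).
  assert (Hn : forall n, Dev (Nat.iter n gauss x) (d0 + INR n * (d0/3))).
  { induction n as [|n IH].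
    - simpl. replace (d0 + 0 * (d0/3)) with d0 by ring. exact Hdev.
    - replace (d0 + INR (S n) * (d0/3)) with ((d0 + INR n * (d0/3)) + d0/3)
        by (rewrite S_INR; ring).
      simpl. apply step; auto.
      + apply HI.
      + specialize (Hd (S n) ltac:(lia)). unfold cf_digit in Hd.
        replace (S n - 1)%nat with n in Hd by lia. exact Hd.
      + assert (0 <= INR n) by apply pos_INR. nra. }
  destruct (INR_archimed (d0/3) 1) as [n Hn1]; [lra|].
  destruct (HI n) as [Hb _]. destruct consts as [_ [_ [_ [C4 C5]]]].
  destruct (Hn n); lra.
Qed.

Lemma B2_bounds (x : R) : B2 x -> ca <= x <= cb.
Proof.
  intros HB. split.
  - destruct (Rle_lt_dec ca x) as [|H]; [auto|].
    exfalso. apply (no_dev x (ca - x)); auto; [lra|]. right; lra.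
  - destruct (Rle_lt_dec x cb) as [|H]; [auto|].
    exfalso. apply (no_dev x (x - cb)); auto; [lra|]. left; lra.
Qed.

Lemma no_sq3_aux : forall n : nat, forall p q : Z, (q * q < Z.of_nat n)%Z ->
  q <> 0%Z -> (p * p = 3 * (q * q))%Z -> False.
Proof.
  induction n as [|n IH]; intros p q Hn Hq E.
  - simpl in Hn. nia.
  - set (m := (p / 3)%Z). set (r := (p mod 3)%Z).
    assert (Hp : p = (3 * m + r)%Z) by (apply Z.div_mod; lia).
    assert (Hr : (0 <= r < 3)%Z) by (apply Z.mod_pos_bound; lia).
    clearbody m r. subst p.
    assert (E2 : (r * r = 3 * (q * q - 3 * m * m - 2 * m * r))%Z) by nia.
    set (K := (q * q - 3 * m * m - 2 * m * r)%Z) in E2. clearbody K.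
    assert (r = 0%Z) by (assert (r = 0 \/ r = 1 \/ r = 2)%Z as [|[|]] by lia; subst; lia).
    subst r.
    assert (E3 : (q * q = 3 * (m * m))%Z) by nia.
    assert (Hm : m <> 0%Z) by (intro; subst; nia).
    apply (IH q m); auto.
    rewrite Nat2Z.inj_succ in Hn. nia.
Qed.

Lemma sqrt3_irr : forall p q : Z, q <> 0%Z -> sqrt 3 <> IZR p / IZR q.
Proof.
  intros p q Hq E.
  destruct sqrt3_facts as [H _].
  assert (Hq' : IZR q <> 0) by (apply not_0_IZR; exact Hq).
  assert (IZR (p * p) = IZR (3 * (q * q))).
  { rewrite !mult_IZR. rewrite E in H.
    replace (IZR p * IZR p) with ((IZR p / IZR q * (IZR p / IZR q)) * (IZR q * IZR q))
      by (field; exact Hq').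
    rewrite H. reflexivity. }
  apply eq_IZR in H0.
  apply (no_sq3_aux (S (Z.to_nat (q * q))) p q); auto.
  rewrite Nat2Z.inj_succ, Z2Nat.id by nia. lia.
Qed.

Lemma ca_irr : irrational ca.
Proof.
  intros p q Hq E. apply (sqrt3_irr (2 * p + q) q Hq).
  assert (Hq' : IZR q <> 0) by (apply not_0_IZR; exact Hq).
  unfold ca in E. rewrite plus_IZR, mult_IZR.
  replace (sqrt 3) with (2 * ((sqrt 3 - 1) / 2) + 1) by field.
  rewrite E. field. exact Hq'.
Qed.

Lemma cb_irr : irrational cb.
Proof.
  intros p q Hq E. apply (sqrt3_irr (p + q) q Hq).
  assert (Hq' : IZR q <> 0) by (apply not_0_IZR; exact Hq).
  unfold cb in E. rewrite plus_IZR.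
  replace (sqrt 3) with ((sqrt 3 - 1) + 1) by ring.
  rewrite E. field. exact Hq'.
Qed.

Lemma inv_ca : / ca = cb + 2.
Proof.
  destruct consts as [_ [_ [C3 [C4 _]]]].
  replace (/ ca) with (/ ca * (ca * (2 + cb))) by (rewrite C3; ring). field. lra.
Qed.

Lemma inv_cb : / cb = ca + 1.
Proof.
  destruct consts as [_ [C2 [_ [_ C5]]]].
  replace (/ cb) with (/ cb * ((ca + 1) * cb)) by (rewrite C2; ring). field. lra.
Qed.

Lemma fl_ca : floorR (/ ca) = 2%Z.
Proof.
  destruct consts as [C1 [_ [_ [_ C5]]]].
  rewrite inv_ca. apply floor_unique. simpl. lra.
Qed.

Lemma fl_cb : floorR (/ cb) = 1%Z.
Proof.
  destruct consts as [C1 [_ [_ [C4 C5]]]].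
  rewrite inv_cb. apply floor_unique. simpl. lra.
Qed.

Lemma g_ca : gauss ca = cb.
Proof. unfold gauss. rewrite fl_ca, inv_ca. simpl. ring. Qed.

Lemma g_cb : gauss cb = ca.
Proof. unfold gauss. rewrite fl_cb, inv_cb. simpl. ring. Qed.

Lemma orbit (x : R) : x = ca \/ x = cb -> forall n,
  Nat.iter n gauss x = ca \/ Nat.iter n gauss x = cb.
Proof.
  intros H n. induction n as [|n IH]; simpl; auto.
  destruct IH as [E|E]; rewrite E; [rewrite g_ca|rewrite g_cb]; auto.
Qed.

Lemma B2_orbit (x : R) : x = ca \/ x = cb -> B2 x.
Proof.
  intros H. destruct consts as [C1 [_ [_ [C4 C5]]]].
  split; [|split].
  - destruct H; subst; lra.
  - destruct H; subst; [apply ca_irr|apply cb_irr].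
  - intros k Hk. unfold cf_digit.
    destruct (orbit x H (k - 1)) as [E|E]; rewrite E;
      [rewrite fl_ca|rewrite fl_cb]; lia.
Qed.

Theorem mainTheorem4 : forall x y z : R,
  (B2 x /\ B2 y /\ B2 z /\ x + y = z) <->
  (x = (sqrt 3 - 1) / 2 /\ y = (sqrt 3 - 1) / 2 /\ z = sqrt 3 - 1).
Proof.
  intros x y z.
  change ((sqrt 3 - 1) / 2) with ca. change (sqrt 3 - 1) with cb.
  destruct consts as [C1 _].
  split.
  - intros [Hx [Hy [Hz E]]].
    apply B2_bounds in Hx. apply B2_bounds in Hy. apply B2_bounds in Hz.
    repeat split; lra.
  - intros [Hx [Hy Hz]]. subst.
    repeat split; try (apply B2_orbit; auto). lra.
Qed.
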